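(* Let $(X,d)$ be an $F$-space with non-decreasing metric $d$, and let $\{X_n\}$ be a nontrivial linear approximation scheme on $X$ with $\dim X_n<\infty$ for all $n$. Writing $\|x\|=d(x,0)$, if $$R_{\|\cdot\|}\Big(\bigcup_n X_n\Big)>0,$$ then $\inf_n E(X,X_n)>0$ and $\{X_n\}$ satisfies Shapiro's theorem on $X$.
   Context: An $F$-space is a complete metric vector space with translation-invariant metric $d$. The metric is non-decreasing if $d(\alpha x,0)\le d(x,0)$ for $0\le\alpha\le1$. A nontrivial linear approximation scheme is a chain $X_0\subsetneq X_1\subsetneq\cdots\subsetneq X$ of linear subspaces (strict inclusions) with $\bigcup_nX_n$ dense in $X$. For a linear subspace $V\subseteq X$, its radius is $R_{\|\cdot\|}(V)=\inf_{v\in V\setminus\{0\}}\sup_{t>0}\|tv\|$ (possibly $+\infty$). $E(x,A)=\inf_{a\in A}d(x,a)$ and $E(X,A)=\sup_{x\in X}E(x,A)$. $\{X_n\}$ satisfies Shapiro's theorem on $X$ if for every non-increasing sequence $\{\varepsilon_n\}$ of nonnegative reals tending to $0$ there exists $x\in X$ with $E(x,X_n)\neq\mathbf{O}(\varepsilon_n)$. *)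

(* Defs.v *)
From HB Require Import structures.
From mathcomp Require Import all_boot all_order all_algebra.
From mathcomp Require Import all_classical all_reals ereal.
Set Implicit Arguments. Unset Strict Implicit. Unset Printing Implicit Defensive.
Import Order.TTheory GRing.Theory Num.Theory.
Local Open Scope classical_set_scope.
Local Open Scope ring_scope.

Section Defs.
Variables (R : realType) (V : lmodType R).

Definition is_metric (d : V -> V -> R) : Prop :=
  [/\ forall x y, 0 <= d x y,
      forall x y, d x y = 0 <-> x = y,
      forall x y, d x y = d y x &
      forall x y z, d x z <= d x y + d y z].

Definition translation_invariant (d : V -> V -> R) : Prop :=
  forall x y z, d (x + z) (y + z) = d x y.

Definition dconv (d : V -> V -> R) (u : nat -> V) (x : V) : Prop :=
  forall e : R, 0 < e -> exists N : nat, forall n, (N <= n)%N -> d (u n) x < e.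

Definition dcauchy (d : V -> V -> R) (u : nat -> V) : Prop :=
  forall e : R, 0 < e -> exists N : nat, forall m n, (N <= m)%N -> (N <= n)%N ->
    d (u m) (u n) < e.

Definition rconv (a : nat -> R) (l : R) : Prop :=
  forall e : R, 0 < e -> exists N : nat, forall n, (N <= n)%N -> `|a n - l| < e.

(* Addition is continuous as a
   consequence of translation invariance; continuity of scalar
   multiplication (jointly) is required explicitly. *)
Definition Fspace (d : V -> V -> R) : Prop :=
  [/\ is_metric d, translation_invariant d,
      (forall (a : nat -> R) (u : nat -> V) (l : R) (x : V),
          rconv a l -> dconv d u x -> dconv d (fun n => a n *: u n) (l *: x)) &
      (forall u : nat -> V, dcauchy d u -> exists x, dconv d u x)].

Definition nondecreasing_metric (d : V -> V -> R) : Prop :=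
  forall (x : V) (a : R), 0 <= a <= 1 -> d (a *: x) 0 <= d x 0.

Definition linear_subspace (S : set V) : Prop :=
  [/\ S 0, forall x y, S x -> S y -> S (x + y) &
      forall (a : R) x, S x -> S (a *: x)].

Definition finite_dimensional (S : set V) : Prop :=
  exists (n : nat) (v : 'I_n -> V),
    forall x, S x <-> exists c : 'I_n -> R, x = \sum_(i < n) c i *: v i.

Definition approx_scheme (d : V -> V -> R) (Xs : nat -> set V) : Prop :=
  [/\ forall n, linear_subspace (Xs n),
      forall n, Xs n `<` Xs n.+1 &
      forall (x : V) (e : R), 0 < e -> exists n y, Xs n y /\ d x y < e].

Definition bigUnion (Xs : nat -> set V) : set V := \bigcup_n Xs n.

Definition radius (d : V -> V -> R) (S : set V) : \bar R :=
  ereal_inf [set ereal_sup [set (d (t *: v) 0)%:E | t in [set t : R | 0 < t]]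
            | v in [set v | S v /\ v <> 0]].

Definition Edist (d : V -> V -> R) (x : V) (A : set V) : \bar R :=
  ereal_inf [set (d x a)%:E | a in A].

Definition EX (d : V -> V -> R) (A : set V) : \bar R :=
  ereal_sup [set Edist d x A | x in [set: V]].

Definition satisfies_Shapiro (d : V -> V -> R) (Xs : nat -> set V) : Prop :=
  forall eps : nat -> R,
    (forall n, 0 <= eps n) ->
    (forall n, eps n.+1 <= eps n) ->
    rconv eps 0 ->
    exists x : V, ~ (exists (C : R) (N : nat), forall n, (N <= n)%N ->
                       (Edist d x (Xs n) <= (C * eps n)%:E)%E).

End Defs.

(* Main.v *)
Require Import Defs.
From HB Require Import structures.
From mathcomp Require Import all_boot all_order all_algebra.
From mathcomp Require Import all_classical all_reals ereal.
From mathcomp Require Import topology normedtype sequences.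
From mathcomp Require Import ring lra.
Require Import Defs.
Import Order.TTheory GRing.Theory Num.Theory numFieldNormedType.Exports.
Set Implicit Arguments. Unset Strict Implicit. Unset Printing Implicit Defensive.
Local Open Scope classical_set_scope.
Local Open Scope ring_scope.

Lemma dE (R : realType) (V : lmodType R) (d : V -> V -> R) :
  translation_invariant d -> forall x y, d x y = d (x - y) 0.
Proof. by move=> Ht x y; rewrite -(Ht (x - y) 0 y) subrK add0r. Qed.

Lemma nrmN (R : realType) (V : lmodType R) (d : V -> V -> R) :
  is_metric d -> translation_invariant d -> forall x, d (- x) 0 = d x 0.
Proof.
move=> [_ _ Hs _] Ht x; rewrite -(Ht (- x) 0 x) addNr add0r; exact: Hs.
Qed.

Lemma nrmD (R : realType) (V : lmodType R) (d : V -> V -> R) :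
  is_metric d -> translation_invariant d -> forall x y, d (x + y) 0 <= d x 0 + d y 0.
Proof.
move=> [_ _ _ Htr] Ht x y; apply: le_trans (Htr _ y _) _.
by rewrite -{2}(add0r y) Ht.
Qed.

Lemma nrm_sum (R : realType) (V : lmodType R) (d : V -> V -> R) :
  is_metric d -> translation_invariant d -> forall k (F : nat -> V),
  d (\sum_(i < k) F i) 0 <= \sum_(i < k) d (F i) 0.
Proof.
move=> Hm Ht; elim=> [|k IH] F.
  rewrite !big_ord0; case: Hm => _ H _ _; by rewrite (proj2 (H 0 0)).
rewrite !big_ord_recr /=.
have h1 := nrmD Hm Ht (\sum_(i < k) F i) (F k).
have h2 : d (\sum_(i < k) F i) 0 + d (F k) 0 <= \sum_(i < k) d (F i) 0 + d (F k) 0 by rewrite lerD2r; exact: IH.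
exact: le_trans h1 h2.

Qed.

Lemma nrm_scale (R : realType) (V : lmodType R) (d : V -> V -> R) :
  is_metric d -> translation_invariant d -> nondecreasing_metric d ->
  forall (a b : R) x, `|a| <= `|b| -> d (a *: x) 0 <= d (b *: x) 0.
Proof.
move=> Hm Ht Hnd a b x hab.
have [b0|b0] := eqVneq b 0.
  by move: hab; rewrite b0 normr0 normr_le0 => /eqP ->.
have ea : a *: x = (a / b) *: (b *: x) by rewrite scalerA divfK.
have hab1 : `|a / b| <= 1 by rewrite normrM normfV ler_pdivrMr ?normr_gt0 // mul1r.
rewrite ea; have [h0|h0] := leP 0 (a / b).
  by apply: Hnd; rewrite h0 -(ger0_norm h0).
rewrite -(nrmN Hm Ht) -scaleNr; apply: Hnd.
by rewrite oppr_ge0 ltW //= -(ltr0_norm h0).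
Qed.

Lemma rconv_inv (R : realType) : rconv (fun m : nat => (m.+1%:R : R)^-1) 0.
Proof.
move=> e e0; exists (Num.truncn e^-1) => n Nn.
rewrite subr0 ger0_norm ?invr_ge0 ?ler0n //.
have h1 : e^-1 < (Num.truncn e^-1).+1%:R by apply: truncnS_gt.
have h2 : ((Num.truncn e^-1).+1%:R : R) <= n.+1%:R by rewrite ler_nat ltnS.
rewrite -[e]invrK ltf_pV2 ?posrE ?invr_gt0 //.
exact: lt_le_trans h1 h2.
Qed.

Lemma small_scale (R : realType) (V : lmodType R) (d : V -> V -> R) :
  Fspace d -> nondecreasing_metric d ->
  forall x e, 0 < e -> exists2 del, 0 < del & forall t, `|t| <= del -> d (t *: x) 0 < e.
Proof.
move=> [Hm Ht Hc _] Hnd x e e0.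
have hx : dconv d (fun _ : nat => x) x.
  by move=> e1 e1p; exists 0%N => n _; case: Hm => _ H _ _; rewrite (proj2 (H x x)).
have [N HN] := Hc _ _ _ _ (@rconv_inv R) hx e e0.
exists (N.+1%:R^-1); first by rewrite invr_gt0 ltr0n.
move=> t ht; apply: le_lt_trans (HN N (leqnn N)); rewrite scale0r.
apply: (nrm_scale Hm Ht Hnd); apply: le_trans ht _.
by rewrite ger0_norm // invr_ge0 ler0n.
Qed.
Lemma sincr_ge (g : nat -> nat) : (forall m, (g m < g m.+1)%N) -> forall m, (m <= g m)%N.
Proof. move=> h; elim=> [//|m IH]; exact: leq_ltn_trans IH (h m). Qed.

Lemma rconv_sub (R : realType) (a : nat -> R) l (g : nat -> nat) :
  rconv a l -> (forall m, (g m < g m.+1)%N) -> rconv (a \o g) l.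
Proof.
move=> ha hg e e0; have [N HN] := ha e e0; exists N => n Nn /=.
apply: HN; exact: leq_trans Nn (sincr_ge hg n).
Qed.

Lemma bw1 (R : realType) (u : nat -> R) : (forall m, `|u m| <= 1) ->
  exists f : nat -> nat, (forall m, (f m < f m.+1)%N) /\ exists l, rconv (u \o f) l.
Proof.
move=> ub.
have [|f finc fcv] := bolzano_weierstrass (u_ := u).
  exists 1; split => //= M HM x _; apply: le_trans (ub x) _; exact: ltW.
exists f; split.
  move=> m.
  have h : (f m.+1 <= f m)%N = (m.+1 <= m)%N by exact: (finc m.+1 m).
  by rewrite ltnNge h ltnn.
have [l Hl] : exists l : R, (u \o f) @ \oo --> l by apply/cvg_ex.
exists l => e e0.
have [N _ HN] := proj1 (@cvgrPdist_lt _ R^o _ _ _ _ _) Hl e e0.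
exists N => n Nn.
by rewrite distrC; apply: HN.
Qed.

Lemma bwK (R : realType) K (u : nat -> nat -> R) : (forall m j, `|u m j| <= 1) ->
  exists f : nat -> nat, (forall m, (f m < f m.+1)%N) /\
  exists q : nat -> R, forall j, (j < K)%N -> rconv (fun m => u (f m) j) (q j).
Proof.
move=> ub; elim: K => [|K [f [finc [q Hq]]]].
  by exists id; split => //; exists (fun _ => 0).
have [g [ginc [l Hl]]] := bw1 (fun m => ub (f m) K).
exists (f \o g); split.
  move=> m /=; apply: (homo_ltn (r := fun a b => (a < b)%N)) => //.
  exact: ltn_trans.
exists (fun j => if j == K then l else q j) => j; rewrite ltnS leq_eqVlt.
case/orP => [/eqP ->|jK]; first by rewrite eqxx.
have -> : (j == K) = false by rewrite ltn_eqF.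
exact: (rconv_sub (Hq j jK) ginc).
Qed.
Definition spn (R : realType) (V : lmodType R) k (b : nat -> V) (x : V) :=
  exists c : nat -> R, x = \sum_(i < k) c i *: b i.
Definition indep (R : realType) (V : lmodType R) k (b : nat -> V) :=
  forall c : nat -> R, \sum_(i < k) c i *: b i = 0 -> forall i, (i < k)%N -> c i = 0.

Lemma fd_nat (R : realType) (V : lmodType R) (S : set V) : finite_dimensional S ->
  exists n (e : nat -> V), forall x, S x <-> spn n e x.
Proof.
move=> [n [e He]].
pose e' := fun j : nat => if (insub j : option 'I_n) is Some i then e i else 0.
have e'E : forall i : 'I_n, e' i = e i by move=> i; rewrite /e' valK.
exists n, e' => x; rewrite He; split.
  move=> [c ->]; exists (fun j => if (insub j : option 'I_n) is Some i then c i else 0).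
  by apply: eq_bigr => i _; rewrite e'E valK.
move=> [c ->]; exists (fun i => c i); apply: eq_bigr => i _; by rewrite e'E.
Qed.

Lemma spn_lin (R : realType) (V : lmodType R) k (b : nat -> V) x y (a : R) :
  spn k b x -> spn k b y -> spn k b (x + a *: y).
Proof.
move=> [c ->] [c' ->]; exists (fun i => c i + a * c' i).
rewrite scaler_sumr -big_split /=; apply: eq_bigr => i _.
by rewrite scalerDl scalerA.
Qed.

Lemma basis (R : realType) (V : lmodType R) n (e : nat -> V) :
  exists k (b : nat -> V), indep k b /\ forall x, spn n e x <-> spn k b x.
Proof.
elim: n => [|n [k [b [bi Hb]]]].
  exists 0%N, e; split; first by move=> c _ i.
  by [].
have spS : forall x, spn n.+1 e x <-> exists y a, spn n e y /\ x = y + a *: e n.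
  move=> x; split.
    move=> [c ->]; rewrite big_ord_recr /=; exists (\sum_(i < n) c i *: e i), (c n).
    by split => //; exists c.
  move=> [y [a [[c ->] ->]]]; exists (fun i => if (i < n)%N then c i else a).
  rewrite big_ord_recr /= ltnn; congr (_ + _); apply: eq_bigr => i _.
  by rewrite ltn_ord.
have [[c0 hw]|hw] := EM (spn k b (e n)).
  exists k, b; split => // x; rewrite spS; split.
    move=> [y [a [/Hb hy ->]]]; apply: spn_lin => //; by exists c0.
  move=> hx; exists x, 0; split; first by apply/Hb.
  by rewrite scale0r addr0.
exists k.+1, (fun i => if (i < k)%N then b i else e n); split.
  move=> c; rewrite big_ord_recr /= ltnn => hc.
  have hsum : \sum_(i < k) c i *: (if (i < k)%N then b i else e n) = \sum_(i < k) c i *: b i.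
    by apply: eq_bigr => i _; rewrite ltn_ord.
  rewrite hsum in hc.
  have ck : c k = 0.
    apply: contrapT => ck; apply: hw.
    exists (fun i => - c i / c k).
    have ck' : c k != 0 by apply/eqP.
    apply: (scalerI ck'); rewrite scaler_sumr.
    have -> : c k *: e n = - \sum_(i < k) c i *: b i by apply/eqP; rewrite -addr_eq0 addrC hc.
    rewrite -sumrN; apply: eq_bigr => i _; rewrite scalerA mulrC divfK //=.
    by rewrite scaleNr.
  rewrite ck scale0r addr0 in hc.
  move=> i; rewrite ltnS leq_eqVlt => /orP [/eqP ->//|ik]; exact: bi hc i ik.
move=> x; rewrite spS; split.
  move=> [y [a [/Hb [c ->] ->]]].
  exists (fun i => if (i < k)%N then c i else a); rewrite big_ord_recr /= ltnn.
  congr (_ + _); apply: eq_bigr => i _; by rewrite ltn_ord.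
move=> [c ->]; rewrite big_ord_recr /= ltnn.
exists (\sum_(i < k) c i *: b i), (c k); split.
  by apply/Hb; exists c.
congr (_ + _); apply: eq_bigr => i _; by rewrite ltn_ord.
Qed.
Lemma ev_all (P : nat -> nat -> Prop) K :
  (forall j, (j < K)%N -> exists N, forall m, (N <= m)%N -> P j m) ->
  exists N, forall m, (N <= m)%N -> forall j, (j < K)%N -> P j m.
Proof.
elim: K => [|K IH] H; first by exists 0%N.
have [N1 HN1] := IH (fun j jK => H j (ltnW jK)).
have [N2 HN2] := H K (ltnSn K).
exists (maxn N1 N2) => m; rewrite geq_max => /andP [h1 h2] j.
rewrite ltnS leq_eqVlt => /orP [/eqP ->|jK]; first exact: HN2.
exact: HN1.
Qed.

Lemma sum_le_const (R : realType) K (x : nat -> R) c :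
  (forall j, (j < K)%N -> x j <= c) -> \sum_(j < K) x j <= K%:R * c.
Proof.
elim: K => [|K IH] H; first by rewrite big_ord0 mul0r.
rewrite big_ord_recr /= -addn1 natrD mulrDl mul1r.
apply: lerD; last exact: H.
by apply: IH => j jK; apply: H; exact: ltnW.
Qed.

Lemma term_le_sum (R : realType) K (x : nat -> R) j :
  (forall i, (i < K)%N -> 0 <= x i) -> (j < K)%N -> x j <= \sum_(i < K) x i.
Proof.
move=> h jK; rewrite (bigD1 (Ordinal jK)) //= lerDl.
by apply: sumr_ge0 => i _; exact: h.
Qed.

Lemma sub_sum (R : realType) (V : lmodType R) (S : set V) k (b : nat -> V) (c : nat -> R) :
  linear_subspace S -> (forall i, (i < k)%N -> S (b i)) -> S (\sum_(i < k) c i *: b i).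
Proof.
move=> [S0 SD SZ] Hb; apply: (big_ind S) => //.
move=> i _; apply: SZ; exact: Hb.
Qed.

Lemma sub_B (R : realType) (V : lmodType R) (S : set V) x y :
  linear_subspace S -> S x -> S y -> S (x - y).
Proof. move=> [S0 SD SZ] hx hy; rewrite -scaleN1r; apply: SD => //; exact: SZ. Qed.

Section Main.
Variables (R : realType) (V : lmodType R) (d : V -> V -> R) (Xs : nat -> set V).
Hypotheses (HF : Fspace d) (Hnd : nondecreasing_metric d) (Has : approx_scheme d Xs)
  (Hfd : forall n, finite_dimensional (Xs n)).
Variable eta : R.
Hypothesis eta0 : 0 < eta.
Hypothesis RAD : forall w, bigUnion Xs w -> w <> 0 -> exists2 s, 0 < s & eta < d (s *: w) 0.

Let Hm : is_metric d. Proof. by case: HF. Qed.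
Let Ht : translation_invariant d. Proof. by case: HF. Qed.
Let Hlin n : linear_subspace (Xs n). Proof. by case: Has. Qed.
Let Hsub n : Xs n `<=` Xs n.+1. Proof. by case: Has => _ h _; exact: properW. Qed.
Let dxx x : d x x = 0. Proof. by case: Hm => _ H _ _; apply/H. Qed.
Let dsym x y : d x y = d y x. Proof. by case: Hm. Qed.
Let dtri x y z : d x z <= d x y + d y z. Proof. by case: Hm. Qed.
Let dge0 x y : 0 <= d x y. Proof. by case: Hm. Qed.

Lemma Xs_mono i j : (i <= j)%N -> Xs i `<=` Xs j.
Proof.
move=> /subnKC <-; elim: (j - i)%N => [|m IH]; first by rewrite addn0.
by rewrite addnS => x /IH /Hsub.
Qed.

Lemma claimK n v : Xs n.+1 v -> ~ Xs n v ->
  exists2 T, 0 < T & forall a, Xs n a -> eta <= d (T *: v) a.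
Proof.
move=> vS vN.
have [k0 [e He]] := fd_nat (Hfd n).
have [k [b [bi Hb]]] := basis k0 e.
have XsE : forall x, Xs n x <-> spn k b x by move=> x; rewrite He; exact: Hb.
have bX : forall i, (i < k)%N -> Xs n (b i).
  move=> i ik; apply/XsE; exists (fun j => if j == i then 1 else 0).
  rewrite (bigD1 (Ordinal ik)) //= eqxx scale1r big1 ?addr0 // => j /eqP hj.
  have -> : (nat_of_ord j == i) = false by apply/negbTE/eqP => h; apply: hj; apply: val_inj.
  by rewrite scale0r.
apply: contrapT => nK.
have H : forall m : nat, exists c : nat -> R,
    d (m.+1%:R *: v) (\sum_(i < k) c i *: b i) < eta.
  move=> m; apply: contrapT => nE; apply: nK; exists m.+1%:R => // a /XsE [c ->].
  by rewrite leNgt; apply/negP => hlt; apply: nE; exists c.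
have [c Hc] := choice H.
pose K := k.+1.
pose f := fun j : nat => if j == 0%N then v else b j.-1.
pose g := fun (m : nat) (j : nat) => if j == 0%N then m.+1%:R else - c m j.-1 : R.
pose Nm := fun m => \sum_(j < K) `|g m j|.
have NmE : forall m, Nm m = m.+1%:R + \sum_(i < k) `|c m i|.
  move=> m; rewrite /Nm big_ord_recl /= /g /= ger0_norm ?ler0n //; congr (_ + _).
  by apply: eq_bigr => i _; rewrite normrN.
have Nmge : forall m, m.+1%:R <= Nm m.
  by move=> m; rewrite NmE lerDl; apply: sumr_ge0 => i _.
have Nm0 : forall m, 0 < Nm m by move=> m; apply: lt_le_trans (Nmge m); rewrite ltr0n.
have sumgf : forall m, \sum_(j < K) g m j *: f j = m.+1%:R *: v - \sum_(i < k) c m i *: b i.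
  move=> m; rewrite big_ord_recl /= /g /f /=; congr (_ + _).
  by rewrite -sumrN; apply: eq_bigr => i _; rewrite scaleNr.
pose p := fun m j => g m j / Nm m.
pose u := fun m j => if (j < K)%N then p m j else 0.
have ub : forall m j, `|u m j| <= 1.
  move=> m j; rewrite /u; case: ifP => jK; last by rewrite normr0.
  rewrite /p normrM normfV (ger0_norm (ltW (Nm0 m))) ler_pdivrMr // mul1r.
  by apply: (term_le_sum (x := fun j => `|g m j|)) => // i _.
have [phi [phinc [q Hq]]] := bwK K ub.
have Hq' : forall j, (j < K)%N -> rconv (fun m => p (phi m) j) (q j).
  by move=> j jK; have := Hq j jK; rewrite /u jK.
have sump1 : forall m, \sum_(j < K) `|p m j| = 1.
  move=> m; rewrite /p.
  under eq_bigr => j _ do rewrite normrM normfV (ger0_norm (ltW (Nm0 m))).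
  by rewrite -mulr_suml -/(Nm m) mulfV // gt_eqF.
have qnz : exists2 j, (j < K)%N & q j <> 0.
  apply: contrapT => hq.
  have hq0 : forall j, (j < K)%N -> q j = 0.
    by move=> j jK; apply: contrapT => qj; apply: hq; exists j.
  have pos : 0 < (2 * K%:R)^-1 :> R by rewrite invr_gt0 mulr_gt0 ?ltr0n.
  have [N HN] := ev_all (P := fun j m => `|p (phi m) j - q j| < (2 * K%:R)^-1)
    (fun j jK => Hq' j jK _ pos).
  have hle : \sum_(j < K) `|p (phi N) j| <= K%:R * (2 * K%:R)^-1.
    apply: (sum_le_const (x := fun j => `|p (phi N) j|)) => j jK; have := HN N (leqnn N) j jK.
    by rewrite hq0 // subr0 => /ltW.
  rewrite sump1 in hle.
  have e2 : K%:R * (2 * K%:R)^-1 = 2^-1 :> R.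
    by rewrite invfM mulrCA mulfV ?pnatr_eq0 // mulr1.
  by move: hle; rewrite e2 leNgt invf_lt1 ?ltr0n ?ltr1n.
have [j0 j0K qj0] := qnz.
pose z := \sum_(j < K) q j *: f j.
have fX : forall j, (j < K)%N -> Xs n.+1 (f j).
  move=> j jK; rewrite /f; case: eqP => // j0'; apply: Hsub; apply: bX.
  by rewrite -ltnS prednK // lt0n; apply/eqP.
have zX : Xs n.+1 z := sub_sum q (Hlin n.+1) fX.
have indf : forall (a : nat -> R), \sum_(j < K) a j *: f j = 0 ->
    forall j, (j < K)%N -> a j = 0.
  move=> a; rewrite big_ord_recl /= => ha.
  have e1 : \sum_(i < k) a (lift ord0 i) *: f (lift ord0 i) = \sum_(i < k) a i.+1 *: b i.
    by apply: eq_bigr.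
  rewrite e1 {1}/f /= in ha.
  have a0 : a 0%N = 0.
    apply: contrapT => a0; apply: vN; apply/XsE; exists (fun i => - a i.+1 / a 0%N).
    have a0' : a 0%N != 0 by apply/eqP.
    apply: (scalerI a0'); rewrite scaler_sumr.
    have -> : a 0%N *: v = - \sum_(i < k) a i.+1 *: b i.
      by apply/eqP; rewrite -addr_eq0 ha.
    rewrite -sumrN; apply: eq_bigr => i _; rewrite scalerA mulrC divfK //.
    by rewrite scaleNr.
  rewrite a0 scale0r add0r in ha.
  move=> j; case: j => [_|j jK]; first exact: a0.
  rewrite ltnS in jK; exact: (bi (fun i => a i.+1) ha j jK).
have znz : z <> 0 by move=> hz; apply: qj0; exact: indf hz j0 j0K.
have [s s0 Hs] : exists2 s, 0 < s & eta < d (s *: z) 0.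
  by apply: RAD => //; exists n.+1.
pose eps := d (s *: z) 0 - eta.
have eps0 : 0 < eps by rewrite subr_gt0.
pose e' := eps / (2 * K%:R).
have e'0 : 0 < e' by rewrite divr_gt0 // mulr_gt0 ?ltr0n.
have Hev : forall j, (j < K)%N -> exists N, forall m, (N <= m)%N ->
    d ((s * (p (phi m) j - q j)) *: f j) 0 < e'.
  move=> j jK.
  have [del del0 Hdel] := small_scale HF Hnd (f j) e'0.
  have [N HN] := Hq' j jK (del / s) (divr_gt0 del0 s0).
  exists N => m mN; apply: Hdel.
  have h1 : `|p (phi m) j - q j| <= del / s by apply: ltW; exact: HN.
  rewrite normrM gtr0_norm //; apply: le_trans (ler_wpM2l (ltW s0) h1) _.
  by rewrite mulrC divfK ?gt_eqF.
have [N HN] := ev_all Hev.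
have [M HM] : exists M : nat, s <= M%:R.
  by exists (Num.truncn s).+1; apply: ltW; exact: truncnS_gt.
pose m := maxn N M.
have mN : (N <= m)%N by rewrite leq_maxl.
have mM : (M <= m)%N by rewrite leq_maxr.
pose w := \sum_(j < K) p (phi m) j *: f j.
have h1 : d (s *: w) (s *: z) <= eps / 2.
  rewrite (dE Ht) -scalerBr.
  have -> : s *: (w - z) = \sum_(j < K) (s * (p (phi m) j - q j)) *: f j.
    by rewrite /w /z -sumrB scaler_sumr; apply: eq_bigr => j _; rewrite -scalerBl scalerA.
  apply: le_trans (nrm_sum Hm Ht K (fun j => (s * (p (phi m) j - q j)) *: f j)) _.
  apply: le_trans (sum_le_const (x := fun j => d ((s * (p (phi m) j - q j)) *: f j) 0) (c := e') _) _.
    by move=> j jK; apply: ltW; exact: HN m mN j jK.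
  rewrite /e' le_eqVlt; apply/orP; left; apply/eqP.
  rewrite /K; field; by rewrite paddr_eq0 ?ler0n // oner_eq0.
have h2 : d (s *: w) 0 < eta.
  have hsN : s <= Nm (phi m).
    apply: le_trans HM _; apply: le_trans (Nmge (phi m)); rewrite ler_nat.
    by apply: leq_trans mM _; apply: leq_trans (sincr_ge phinc m) _.
  apply: le_lt_trans (nrm_scale Hm Ht Hnd (b := Nm (phi m)) w _) _.
    by rewrite !ger0_norm // ?(ltW s0) ?(ltW (Nm0 _)).
  have -> : Nm (phi m) *: w = \sum_(j < K) g (phi m) j *: f j.
    rewrite /w scaler_sumr; apply: eq_bigr => j _; rewrite scalerA /p mulrC divfK //.
    exact: lt0r_neq0 (Nm0 _).
  by rewrite sumgf -(dE Ht); exact: Hc.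
have h3 : d (s *: z) 0 <= d (s *: w) (s *: z) + d (s *: w) 0.
  by rewrite [d (s *: w) (s *: z)]dsym; apply: dtri.
move: h1 h2 h3 Hs; rewrite /eps.
move: (d (s *: z) 0) (d (s *: w) (s *: z)) (d (s *: w) 0) => A B C.
move=> *; lra.
Qed.
End Main.
Section Main2.
Variables (R : realType) (V : lmodType R) (d : V -> V -> R) (Xs : nat -> set V).
Hypotheses (HF : Fspace d) (Hnd : nondecreasing_metric d) (Has : approx_scheme d Xs)
  (Hfd : forall n, finite_dimensional (Xs n)).
Variable eta : R.
Hypothesis eta0 : 0 < eta.
Hypothesis RAD : forall w, bigUnion Xs w -> w <> 0 -> exists2 s, 0 < s & eta < d (s *: w) 0.

Let Hm : is_metric d. Proof. by case: HF. Qed.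
Let Ht : translation_invariant d. Proof. by case: HF. Qed.
Let Hlin n : linear_subspace (Xs n). Proof. by case: Has. Qed.
Let Hsub n : Xs n `<=` Xs n.+1. Proof. by case: Has => _ h _; exact: properW. Qed.
Let dxx x : d x x = 0. Proof. by case: Hm => _ H _ _; apply/H. Qed.
Let dsym x y : d x y = d y x. Proof. by case: Hm. Qed.
Let dtri x y z : d x z <= d x y + d y z. Proof. by case: Hm. Qed.
Let dge0 x y : 0 <= d x y. Proof. by case: Hm. Qed.

Lemma lemY n th : 0 < th -> th < eta ->
  exists y, Xs n.+1 y /\ d y 0 <= 2 * th /\ forall a, Xs n a -> th <= d y a.
Proof.
move=> th0 the.
have [v vS vN] : exists2 v, Xs n.+1 v & ~ Xs n v.
  case: Has => _ hp _; have [_ nsub] := hp n; apply: contrapT => hn; apply: nsub.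
  move=> x hx; apply: contrapT => hx'; apply: hn; by exists x.
have [T T0 HT] := claimK HF Hnd Has Hfd RAD vS vN.
have [h h0 Hh] := small_scale HF Hnd v (divr_gt0 th0 (ltr0n _ 2)).
pose P := fun j : nat => forall a, Xs n a -> th <= d ((j%:R * h) *: v) a.
have nP0 : ~ P 0%N.
  move=> H; have := H 0; case: (Hlin n) => S0 _ _; move/(_ S0).
  by rewrite mul0r scale0r dxx leNgt th0.
have PJ : exists J, P J.
  exists (Num.truncn (T / h)).+1 => a Xa.
  set J := (Num.truncn (T / h)).+1.
  have hJ : T / h < J%:R by apply: truncnS_gt.
  have hJ' : T < J%:R * h by rewrite -ltr_pdivrMr.
  pose be := (J%:R * h) / T.
  have be1 : 1 <= be by rewrite /be ler_pdivlMr // mul1r ltW.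
  have be0 : be != 0 by apply: lt0r_neq0; apply: lt_le_trans be1.
  have e : (J%:R * h) *: v - a = be *: (T *: v - be^-1 *: a).
    rewrite scalerBr !scalerA mulfV // scale1r /be divfK //; exact: lt0r_neq0.
  rewrite (dE Ht) e.
  apply: le_trans (nrm_scale Hm Ht Hnd (a := 1) (b := be) _ _); last first.
    by rewrite normr1 ger0_norm // (le_trans ler01 be1).
  rewrite scale1r -(dE Ht); apply: le_trans (ltW the) _; apply: HT.
  by case: (Hlin n) => _ _ SZ; apply: SZ.
have trans : forall J, P J -> exists j, ~ P j /\ P j.+1.
  elim=> [//|J IH] PJ1.
  case: (EM (P J)) => [PJ'|nPJ]; [exact: IH | by exists J].
have [J PJJ] := PJ.
have [j [nPj Pj1]] := trans J PJJ.
have [a [Xa ha]] : exists a, Xs n a /\ d ((j%:R * h) *: v) a < th.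
  apply: contrapT => H; apply: nPj => a Xa; rewrite leNgt; apply/negP => hlt.
  by apply: H; exists a.
exists ((j.+1%:R * h) *: v - a); split; [|split].
- apply: sub_B (Hlin n.+1) _ _; last exact: Hsub.
  by case: (Hlin n.+1) => _ _ SZ; apply: SZ.
- rewrite -(dE Ht).
  have h1 : d ((j.+1%:R * h) *: v) ((j%:R * h) *: v) < th / 2.
    rewrite (dE Ht) -scalerBl.
    have -> : j.+1%:R * h - j%:R * h = h by rewrite -natr1 mulrDl mul1r addrAC subrr add0r.
    by apply: Hh; rewrite ger0_norm // ltW.
  have h2 := dtri ((j.+1%:R * h) *: v) ((j%:R * h) *: v) a.
  move: h1 h2 ha th0; move: (d _ a) (d _ ((j%:R * h) *: v)) (d ((j%:R * h) *: v) a).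
  move=> A B C *; lra.
- move=> b Xb; rewrite (dE Ht) -addrA -opprD -(dE Ht); apply: Pj1.
  by case: (Hlin n) => _ SD _; apply: SD.
Qed.
End Main2.
Lemma geo (R : realType) p : (8^-1 : R) ^+ p <= (p.+1%:R)^-1.
Proof.
rewrite exprVn lef_pV2 ?posrE ?exprn_gt0 ?ltr0n //.
have h : (p.+1 <= 8 ^ p)%N by apply: ltn_expl.
by rewrite -natrX ler_nat.
Qed.

Fixpoint mmf (Nf : nat -> nat) (j : nat) : nat :=
  match j with 0 => Nf 0%N | j'.+1 => maxn (mmf Nf j').+1 (Nf j'.+1) end.

Lemma mmf_incr Nf j : (mmf Nf j < mmf Nf j.+1)%N.
Proof. by rewrite /= leq_maxl. Qed.

Lemma mmf_ge Nf j : (Nf j <= mmf Nf j)%N.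
Proof. by case: j => [//|j]; rewrite /= leq_maxr. Qed.

Theorem mainTheorem3 (R : realType) (V : lmodType R) (d : V -> V -> R)
  (Xs : nat -> set V) :
  Fspace d -> nondecreasing_metric d ->
  approx_scheme d Xs ->
  (forall n, finite_dimensional (Xs n)) ->
  (0 < radius d (bigUnion Xs))%E ->
  (0 < ereal_inf [set EX d (Xs n) | n in [set: nat]])%E /\
  satisfies_Shapiro d Xs.
Proof.
move=> HF Hnd Has Hfd Hrad.
have HF' := HF; case: HF' => Hm Ht Hc Hcomp.
have Hm' := Hm; case: Hm' => dge0 deq dsym dtri.
have dxx : forall x, d x x = 0 by move=> x; apply/deq.
have [eta eta0 Heta] : exists2 eta : R, 0 < eta & (eta%:E < radius d (bigUnion Xs))%E.
  move: Hrad; case: (radius d (bigUnion Xs)) => [r| |] //.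
    rewrite lte_fin => r0; exists (r / 2); first by rewrite divr_gt0.
    by rewrite lte_fin; lra.
  by move=> _; exists 1 => //; exact: ltry.
have RAD : forall w, bigUnion Xs w -> w <> 0 -> exists2 s, 0 < s & eta < d (s *: w) 0.
  move=> w wU w0.
  have : (eta%:E < ereal_sup [set (d (t *: w) 0)%:E | t in [set t : R | (0 < t)%R]])%E.
    by apply: lt_le_trans Heta _; apply: ereal_inf_lbound; exists w.
  by move/ereal_sup_gt => [y [t t0 <-] hy]; exists t => //; rewrite lte_fin in hy.
have Hlin : forall n, linear_subspace (Xs n) by case: Has.
split.
  apply: (@lt_le_trans _ _ ((eta / 2)%:E)); first by rewrite lte_fin divr_gt0.
  apply/ereal_infP => _ [n _ <-].
  have h2 : eta / 2 < eta by lra.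
  have [y [_ [_ Hy]]] := lemY HF Hnd Has Hfd RAD n (divr_gt0 eta0 (ltr0n _ 2)) h2.
  apply: le_trans (ereal_sup_ubound (x := Edist d y (Xs n)) _); last by exists y.
  by apply/ereal_infP => _ [a Xa <-]; rewrite lee_fin; exact: Hy.
move=> eps eps0 epsdec epsc.
pose c := eta / 2.
have c0 : 0 < c by rewrite divr_gt0.
pose r : R := 8^-1.
have r0 : 0 < r by rewrite invr_gt0 ltr0n.
pose th := fun j : nat => c * r ^+ j.
have rj0 : forall j, 0 < r ^+ j by move=> j; rewrite exprn_gt0.
have th0 : forall j, 0 < th j by move=> j; rewrite /th mulr_gt0.
have rle1 : forall j, r ^+ j <= 1.
  by move=> j; rewrite exprn_ile1 // ?(ltW r0) // invf_le1 ?ltr0n ?ler1n.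
have the : forall j, th j < eta.
  move=> j; have := rle1 j; have := rj0 j; rewrite /th /c; move: (r ^+ j) => t *; nra.
have HY : forall p : nat * nat, exists y, Xs p.1.+1 y /\ d y 0 <= 2 * th p.2 /\
    forall a, Xs p.1 a -> th p.2 <= d y a.
  move=> [n j] /=; by have := lemY HF Hnd Has Hfd RAD n (th0 j) (the j).
have [Y HYs] := choice HY.
have HN : forall j, exists N, forall m, (N <= m)%N -> eps m < th j / (2 * j.+1%:R).
  move=> j; have [N HN] := epsc _ (divr_gt0 (th0 j) (mulr_gt0 (ltr0n _ 2) (ltr0n _ j.+1))).
  by exists N => m mN; have := HN m mN; rewrite subr0 ger0_norm.
have [Nf HNf] := choice HN.
pose mm := mmf Nf.
have mminc : forall a b, (a < b)%N -> (mm a < mm b)%N.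
  move=> a b ab; exact: (homo_ltn (r := fun a b => (a < b)%N) ltn_trans (mmf_incr Nf) ab).
pose y := fun j => Y (mm j, j).
have yX : forall j, Xs (mm j).+1 (y j) by move=> j; exact: (HYs (mm j, j)).1.
have ynrm : forall j, d (y j) 0 <= 2 * th j by move=> j; exact: (HYs (mm j, j)).2.1.
have yfar : forall j a, Xs (mm j) a -> th j <= d (y j) a.
  by move=> j; exact: (HYs (mm j, j)).2.2.
pose S := fun p => \sum_(j < p) y j.
have SX : forall j, Xs (mm j) (S j).
  move=> j; rewrite /S; case: (Hlin (mm j)) => S0 SD _.
  apply: (big_ind (Xs (mm j))) => // i _.
  by apply: (Xs_mono Has (i := (mm i).+1)) => //; exact: mminc (ltn_ord i).
have Sstep : forall q, S q.+1 = S q + y q by move=> q; rewrite /S big_ord_recr.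
have dstep : forall q, d (S q.+1) (S q) <= 2 * th q.
  by move=> q; rewrite Sstep (dE Ht) addrAC subrr add0r; exact: ynrm.
have Sbound : forall p t : nat, d (S (p + t)%N) (S p) <= 3 * c * (r ^+ p - r ^+ (p + t)%N).
  move=> p; elim=> [|t IH]; first by rewrite addn0 dxx subrr mulr0.
  rewrite addnS; apply: le_trans (dtri _ (S (p + t)%N) _) _.
  have h := dstep (p + t)%N; rewrite /th in h; rewrite exprSr.
  have := rj0 (p + t)%N.
  move: IH h; move: (d _ (S (p + t)%N)) (d (S (p + t)%N) (S p)) (r ^+ (p + t)%N) (r ^+ p) => A B t1 t2.
  rewrite /r => *; nra.
have Sb' : forall p q, (p <= q)%N -> d (S q) (S p) <= 3 * c * r ^+ p.
  move=> p q /subnKC <-; apply: le_trans (Sbound p (q - p)%N) _.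
  have := rj0 (p + (q - p))%N; move: (r ^+ _) (r ^+ p) => t1 t2 *; nra.
have rsmall : forall e, 0 < e -> exists p, 3 * c * r ^+ p < e.
  move=> e e0; exists (Num.truncn (3 * c / e)).
  set p := Num.truncn (3 * c / e).
  have h := truncnS_gt (3 * c / e); rewrite -/p in h.
  have g := geo R p.
  rewrite ltr_pdivrMr // in h.
  apply: le_lt_trans (ler_wpM2l _ g) _; first by rewrite mulr_ge0 // ltW.
  rewrite ltr_pdivrMr ?ltr0n //; move: h; move: (p.+1%:R) => P; nra.
have Scauchy : dcauchy d S.
  move=> e e0; have [p Hp] := rsmall (e / 2) (divr_gt0 e0 (ltr0n _ 2)).
  exists p => m n pm pn.
  have h1 := Sb' p m pm; have h2 := Sb' p n pn.
  have h3 := dtri (S m) (S p) (S n); rewrite [d (S p) (S n)]dsym in h3.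
  lra.
have [x Hx] := Hcomp S Scauchy.
have far : forall j a, Xs (mm j) a -> th j / 2 <= d x a.
  move=> j a Xa.
  have [q0 Hq0] := Hx (th j / 8) (divr_gt0 (th0 j) (ltr0n _ 8)).
  pose q := maxn q0 j.+1.
  have h1 : d (S q) x < th j / 8 by apply: Hq0; exact: leq_maxl.
  have h2 : th j <= d (S j.+1) a.
    rewrite Sstep (dE Ht).
    have -> : S j + y j - a = y j - (a - S j) by rewrite opprB addrCA addrA.
    rewrite -(dE Ht); apply: yfar; exact: sub_B (Hlin (mm j)) Xa (SX j).
  have h3 : d (S q) (S j.+1) <= 3 * c * r ^+ j.+1 by apply: Sb'; exact: leq_maxr.
  have e3 : 3 * c * r ^+ j.+1 = 3 * th j / 8 by rewrite exprS /th /r; field.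
  have t1 := dtri (S j.+1) (S q) a.
  have t2 := dtri (S q) x a.
  rewrite [d (S j.+1) (S q)]dsym in t1.
  lra.
exists x; move=> [C [N HCN]].
pose j := maxn N (Num.truncn C).
have jN : (N <= mm j)%N.
  exact: leq_trans (leq_maxl _ _) (sincr_ge (mmf_incr Nf) j).
have hC : C <= j.+1%:R.
  apply: ltW; apply: lt_le_trans (truncnS_gt C) _; rewrite ler_nat ltnS; exact: leq_maxr.
have hE := HCN (mm j) jN.
have hlow : ((th j / 2)%:E <= Edist d x (Xs (mm j)))%E.
  by apply/ereal_infP => _ [a Xa <-]; rewrite lee_fin; exact: far.
have := le_trans hlow hE; rewrite lee_fin => hle.
have he := HNf j (mm j) (mmf_ge Nf j).
have e0' := eps0 (mm j).
have m1 : C * eps (mm j) <= j.+1%:R * eps (mm j) by rewrite ler_wpM2r.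
have m2 : j.+1%:R * eps (mm j) < j.+1%:R * (th j / (2 * j.+1%:R)).
  by rewrite ltr_pM2l ?ltr0n.
have m3 : j.+1%:R * (th j / (2 * j.+1%:R)) = th j / 2.
  by field; rewrite paddr_eq0 ?ler0n // oner_eq0.
by have := le_lt_trans (le_trans hle m1) m2; rewrite m3 ltxx.
Qed.
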